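(* Let $k\ge 100$ be an integer and let $\alpha_1,\ldots,\alpha_k$ be the roots of $f_k(X)=X^k-X^{k-1}-\cdots-X-1$. Then $$|\alpha_i-\alpha_j|>\frac{1}{k^{3/2}\,3^{k/2}}\qquad\text{for all }1\le i<j\le k.$$
   Context: $f_k(X)=X^k-X^{k-1}-\cdots-X-1$; its roots are distinct. *)

(* Defs.v *)
From mathcomp Require Import all_boot all_order all_algebra all_field.
Set Implicit Arguments. Unset Strict Implicit. Unset Printing Implicit Defensive.
Import Order.TTheory GRing.Theory Num.Theory.
Local Open Scope ring_scope.

Definition fk (k : nat) : {poly algC} := 'X^k - \sum_(i < k) 'X^i.

(* Main.v *)
Require Import Defs.
From mathcomp Require Import all_boot all_order all_algebra all_field.
From mathcomp Require Import lra ring zify.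
Import Order.TTheory GRing.Theory Num.Theory.
Local Open Scope ring_scope.

Section Real.
Variable R0 : realFieldType.

Lemma bern (z : R0) m : 0 <= z -> 1 <= z ^+ m + m%:R * (1 - z).
Proof.
move=> z0; elim: m => [|m IH]; first by rewrite expr0 mul0r addr0.
rewrite exprS -addn1 natrD.
have h : 0 <= z ^+ m by apply: exprn_ge0.
have hm : 0 <= m%:R * (1 - z) ^+ 2 by apply: mulr_ge0; [apply: ler0n| apply: sqr_ge0].
nra.
Qed.

Lemma pow_ge1 (x : R0) n : 1 <= x -> x <= x ^+ n.+1.
Proof.
move=> x1; rewrite exprS; have h : 1 <= x ^+ n by apply: exprn_ege1.
nra.
Qed.

Lemma pow_le1 (x : R0) n : 0 <= x -> x <= 1 -> x ^+ n.+1 <= x ^+ n.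
Proof.
move=> x0 x1; rewrite exprS; have h : 0 <= x ^+ n by apply: exprn_ge0.
nra.
Qed.

Lemma nat3 m : (9 <= m)%N -> (27 * (2 * m + 2) ^ 2 <= 3 ^ m)%N.
Proof.
elim: m => [//|m IH]; rewrite leq_eqVlt => /orP [/eqP <- //|].
rewrite ltnS => hm; have h := IH hm.
rewrite [(3 ^ m.+1)%N]expnS.
have : ((2 * m.+1 + 2) ^ 2 <= 3 * (2 * m + 2) ^ 2)%N by rewrite !expnS !expn0; nia.
move: h; move: (3 ^ m)%N (2 * m.+1 + 2)%N (2 * m + 2)%N => X A B h1 h2; move: (A ^ 2)%N (B ^ 2)%N h1 h2 => A2 B2. lia.
Qed.

Lemma nat2 m : (7 <= m)%N -> ((m + 2) ^ 2 < 2 ^ m)%N.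
Proof.
elim: m => [//|m IH]; rewrite leq_eqVlt => /orP [/eqP <- //|].
rewrite ltnS => hm; have h := IH hm.
rewrite [(2 ^ m.+1)%N]expnS.
have : ((m.+1 + 2) ^ 2 <= 2 * (m + 2) ^ 2)%N by rewrite !expnS !expn0; nia.
move: h; move: (2 ^ m)%N (m.+1 + 2)%N (m + 2)%N => X A B h1 h2; move: (A ^ 2)%N (B ^ 2)%N h1 h2 => A2 B2; lia.
Qed.

Lemma qbound n (q : R0) : (99 <= n)%N -> 0 <= q -> q ^+ 2 = 3 ->
  27 * (n%:R + 2) ^+ 2 <= q ^+ n.+1.
Proof.
move=> hn q0 hq.
have hq1 : 1 <= q by nra.
have hm : (9 <= (n.+1)./2)%N.
  have := odd_double_half n.+1; rewrite -muln2.
  move: (n.+1)./2 => h; case: (odd n.+1) => /= E; lia.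
have := nat3 _ hm; rewrite -(ler_nat R0) !(natrX, natrM, natrD) => h.
have hle : n%:R + 2 <= 2 * (n.+1)./2%:R + 2 :> R0.
  have : (n.+2 <= 2 * (n.+1)./2 + 2)%N.
    have := odd_double_half n.+1; rewrite -muln2.
    move: (n.+1)./2 => h'; case: (odd n.+1) => /= E; lia.
  rewrite -(ler_nat R0) !(natrD, natrM) => hh.
  have e2 : n.+2%:R = n%:R + 2 :> R0 by rewrite -addn2 natrD.
  lra.
have -> : n.+1 = (odd n.+1 + (n.+1)./2.*2)%N by rewrite odd_double_half.
rewrite exprD -mul2n exprM hq.
have h0 : 1 <= q ^+ odd n.+1 by apply: exprn_ege1.
have h30 : 0 <= 3 ^+ (n.+1)./2 :> R0 by apply: exprn_ge0.
have hN0 : 0 <= n%:R :> R0 by apply: ler0n.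
have h4 : (n%:R + 2) ^+ 2 <= (2 * (n.+1)./2%:R + 2) ^+ 2 :> R0.
  by apply: lerXn2r; rewrite ?nnegrE //; lra.
move: h h0 h30 h4; move: (q ^+ _) (3 ^+ _) ((n%:R + 2) ^+ 2) ((2 * _ + 2) ^+ 2) => A B C D.
move=> h h0 h30 h4; nra.
Qed.

Lemma finish (N e s Q : R0) : 0 <= N -> 0 < e -> 1 <= s -> 27 * (N + 2) ^+ 2 <= Q ->
  1 < 27 * (N + 1) * (N + 2) ^+ 2 * e -> 1 / ((N + 1) * s * Q) < e.
Proof.
move=> hN he hs hQ hD.
have hM : 4 <= (N + 2) ^+ 2 by rewrite expr2; nra.
move: hM hQ hD; move: ((N + 2) ^+ 2) => M hM hQ hD.
have hQp : 0 < Q by nra.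
rewrite ltr_pdivrMr; last by apply: mulr_gt0 => //; nra.
have : 27 * (N + 1) * M <= (N + 1) * s * Q.
  have h1 : (N + 1) * (27 * M) <= (N + 1) * s * Q.
    rewrite -mulrA; apply: ler_pM; nra.
  have ee : 27 * (N + 1) * M = (N + 1) * (27 * M) by ring.
  by rewrite ee.
nra.
Qed.

Lemma real_main (n : nat) (r w u e s q : R0) :
  (99 <= n)%N -> 0 <= r -> 0 <= w -> 0 <= u -> 0 < e -> 0 <= s -> 0 <= q ->
  s ^+ 2 = n.+1%:R -> q ^+ 2 = 3 ->
  r ^+ n.+1 * w = 1 -> w <= 2 + r -> r <= w + 2 ->
  2 - u <= n.+2%:R * w -> 2 * n.+1%:R - u <= n.+2%:R * r ->
  r ^+ n * e * u <= 2 * n.+1%:R ^+ 2 * e ^+ 2 * (if 1 <= r then r else 1) ^+ n.+1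
                    + n.+2%:R ^+ 2 * e ^+ 2 * (if 1 <= r then r else 1) ^+ n.+2 ->
  1 / (n.+1%:R * s * q ^+ n.+1) < e.
Proof.
move=> hn r0 w0 u0 e0 s0 q0 hs hq hrw hw2 hr2 hw hr H.
have e1 : n.+1%:R = n%:R + 1 :> R0 by rewrite -addn1 natrD.
have e2 : n.+2%:R = n%:R + 2 :> R0 by rewrite -addn2 natrD.
rewrite e1 e2 in hs hw hr H *.
set N := n%:R in hs hw hr H e1 e2 *.
have hN : 99 <= N by rewrite /N (ler_nat _ 99).
set P := r ^+ n in H.
have hP0 : 0 <= P by apply: exprn_ge0.
have eQ : r ^+ n.+1 = P * r by rewrite exprSr.
rewrite eQ in hrw.
have hr3 : r < 3.
  rewrite ltNge; apply/negP => h3.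
  have h1r : 1 <= r by lra.
  have := pow_ge1 r n h1r; rewrite eQ => h.
  nra.
have rpos : 0 < r.
  rewrite lt_def r0 andbT; apply/negP => /eqP rz.
  by move: hrw; rewrite rz mulr0 mul0r => /eqP; rewrite eq_sym oner_eq0.
set Rr := (if 1 <= r then r else 1) in H.
have [hX1 hX2] : Rr ^+ n.+1 <= Rr ^+ n.+2 /\ Rr ^+ n.+2 <= 9 * P.
  rewrite /Rr; case: (boolP (1 <= r)) => h1.
    rewrite !exprSr -/P; have hPr : 0 <= P * r by nra.
    have hrr : r * r <= 9 by nra.
    split; nra.
  rewrite !expr1n; split => //.
  have rl1 : r < 1 by rewrite ltNge.
  have hPr : 0 <= P * r by nra.
  have hPr2 : P * r <= P by nra.
  nra.
have hPp : 0 < P by rewrite /P exprn_gt0.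
have hu : u <= 27 * (N + 2) ^+ 2 * e.
  set A1 := (N + 1) ^+ 2 * e ^+ 2 in H.
  set C := (N + 2) ^+ 2 * e ^+ 2 in H.
  have hA1 : A1 <= C.
    rewrite /A1 /C; apply: ler_wpM2r; first by rewrite exprn_ge0 // ltW.
    apply: lerXn2r; rewrite ?nnegrE; nra.
  have hA0 : 0 <= A1 by rewrite /A1 mulr_ge0 // exprn_ge0 // ?ltW //; lra.
  have hX10 : 0 <= Rr ^+ n.+1 by rewrite exprn_ge0 // /Rr; case: ifP.
  have h1 : A1 * Rr ^+ n.+1 <= C * Rr ^+ n.+2 by apply: ler_pM.
  have hC0 : 0 <= C by apply: le_trans hA1.
  have h2 : C * Rr ^+ n.+2 <= C * (9 * P) by apply: ler_wpM2l.
  have h3 : P * e * u <= (27 * (N + 2) ^+ 2 * e) * (P * e).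
    have -> : 27 * (N + 2) ^+ 2 * e * (P * e) = 27 * (C * P) by rewrite /C; ring.
    have H' : P * e * u <= 2 * (A1 * Rr ^+ n.+1) + C * Rr ^+ n.+2.
      by apply: (le_trans H); rewrite le_eqVlt; apply/orP; left; apply/eqP; rewrite /A1 /C; ring.
    clearbody A1 C Rr; lra.
  have eq3 : P * e * u = u * (P * e) by ring.
  rewrite eq3 in h3.
  by move: h3; rewrite ler_pM2r // mulr_gt0.
have hT : (N + 2) ^+ 2 < 2 ^+ n.
  have := nat2 n (leq_trans (isT : (7 <= 99)%N) hn).
  by rewrite -(ltr_nat R0) natrX natrD natrX.
have hu1 : 1 < (N + 1) * u.
  rewrite ltNge; apply/negP => hc.
  have hb := bern (r / 2) (n.+1) (divr_ge0 r0 (ler0n R0 2)).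
  rewrite expr_div_n e1 eQ exprSr in hb.
  set T := 2 ^+ n in hT hb.
  have hTp : 0 < T by apply: lt_trans hT; rewrite exprn_gt0 //; nra.
  have hB : (N + 2) * (P * r) >= T.
    have ee : P * r / (T * 2) = (P * r) / T / 2 by rewrite invfM mulrA.
    rewrite ee in hb.
    have hq1 : (N + 2) * (P * r / T) >= 1 by nra.
    by move: hq1; rewrite mulrA ler_pdivlMr // mul1r.
  nra.
have hD : 1 < 27 * (N + 1) * (N + 2) ^+ 2 * e by nra.
have hs1 : 1 <= s.
  move: hs s0 hN; clear; move=> hs s0 hN; nra.
have hN0 : 0 <= N by lra.
have hq3 := qbound n q hn q0 hq.
apply: finish => //.
Qed.
End Real.
Lemma rootE k (a : algC) : root (fk k) a -> a ^+ k * (2 - a) = 1.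
Proof.
rewrite /root /fk hornerD hornerN horner_sum hornerXn => /eqP H.
have Hs : \sum_(i < k) ('X^i).[a] = \sum_(i < k) a ^+ i.
  by apply: eq_bigr => i _; rewrite hornerXn.
rewrite Hs in H.
have H2 : (a - 1) * (a ^+ k - \sum_(i < k) a ^+ i) = 0 by rewrite H mulr0.
rewrite mulrBr -subrX1 in H2.
have -> : a ^+ k * (2 - a) = 1 - ((a - 1) * a ^+ k - (a ^+ k - 1)) by ring.
by rewrite H2 subr0.
Qed.

Lemma Ebound (a b R : algC) n : 1 <= R -> `|a| <= R -> `|b| <= R ->
  `|b ^+ n.+1 - a ^+ n.+1 - n.+1%:R * a ^+ n * (b - a)| <=
    n.+1%:R ^+ 2 * `|b - a| ^+ 2 * R ^+ n.+1.
Proof.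
move=> R1 aR bR.
have R0 : 0 <= R by apply: le_trans R1.
have e0 : 0 <= `|b - a| ^+ 2 by apply: exprn_ge0.
elim: n => [|n IH].
  have -> : b ^+ 1 - a ^+ 1 - 1%:R * a ^+ 0 * (b - a) = 0 by ring.
  by rewrite normr0 mulr_ge0 ?exprn_ge0 // mulr_ge0 ?exprn_ge0.
set E := b ^+ n.+1 - a ^+ n.+1 - n.+1%:R * a ^+ n * (b - a) in IH.
have -> : b ^+ n.+2 - a ^+ n.+2 - n.+2%:R * a ^+ n.+1 * (b - a)
    = b * E + n.+1%:R * a ^+ n * (b - a) ^+ 2.
  have e2 : n.+2%:R = n.+1%:R + 1 :> algC by rewrite -addn1 natrD.
  rewrite /E e2; move: (n.+1%:R : algC) => N; rewrite !exprS; ring.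
apply: le_trans (ler_normD _ _) _.
rewrite !normrM !normrX normr_nat.
set X := `|b - a| ^+ 2.
have h1 : `|b| * `|E| <= R * (n.+1%:R ^+ 2 * X * R ^+ n.+1) by apply: ler_pM.
have h2 : n.+1%:R * `|a| ^+ n * X <= n.+1%:R * R ^+ n.+2 * X.
  apply: ler_wpM2r => //; apply: ler_wpM2l => //.
  apply: le_trans (_ : R ^+ n <= _).
    by apply: lerXn2r; rewrite ?nnegrE.
  rewrite exprSr exprSr -mulrA ler_peMr ?exprn_ge0 //.
  by rewrite -expr2 exprn_ege1.
apply: le_trans (lerD h1 h2) _.
have -> : R * (n.+1%:R ^+ 2 * X * R ^+ n.+1) + n.+1%:R * R ^+ n.+2 * X
   = ((n.+1 ^ 2 + n.+1)%N)%:R * (X * R ^+ n.+2) by rewrite natrD natrX !exprS; ring.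
have -> : n.+2%:R ^+ 2 * X * R ^+ n.+2 = ((n.+2 ^ 2)%N)%:R * (X * R ^+ n.+2)
  by rewrite natrX !exprS; ring.
apply: ler_wpM2r; first by rewrite mulr_ge0 ?exprn_ge0.
by rewrite ler_nat; nia.
Qed.

Lemma lift_le (x y : algR) : algRval x <= algRval y -> x <= y. Proof. by []. Qed.
Lemma lift_lt (x y : algR) : x < y -> algRval x < algRval y. Proof. by []. Qed.
Lemma lift_lt' (x y : algR) : algRval x < algRval y -> x < y. Proof. by []. Qed.
Lemma lift_eq (x y : algR) : algRval x = algRval y -> x = y. Proof. exact: val_inj. Qed.
Lemma lift_leE (x y : algR) : (x <= y) = (algRval x <= algRval y). Proof. by []. Qed.
Arguments lift_le {x y}. Arguments lift_lt {x y}. Arguments lift_lt' {x y}. Arguments lift_eq {x y}.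

Theorem mainTheorem3 (k : nat) (a b : algC) :
  (100 <= k)%N -> root (fk k) a -> root (fk k) b -> a != b ->
  `|a - b| > 1 / (k%:R * sqrtC k%:R * sqrtC 3 ^+ k).
Proof.
move=> hk.
wlog Hab : a b / `|b| <= `|a|.
  move=> W ra rb hne.
  case/orP: (real_leVge (normr_real b) (normr_real a)) => h; first exact: W.
  by rewrite distrC; apply: W => //; rewrite eq_sym.
move=> ra rb hne.
case: k hk ra rb => [//|n] hk ra rb.
have hn : (99 <= n)%N by [].
have ha := rootE _ _ ra; have hb := rootE _ _ rb.
set R := if 1 <= `|a| then `|a| else 1.
have [hR1 haR] : 1 <= R /\ `|a| <= R.
  rewrite /R; case: (boolP (1 <= `|a|)) => h; split => //.
  have : `|a| < 1 by rewrite real_ltNge ?normr_real ?real1.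
  by move/ltW.
have hbR : `|b| <= R := le_trans Hab haR.
set t := n.+2%:R * a - 2 * n.+1%:R.
have key : a ^+ n * (b - a) * t =
    2 * (b ^+ n.+1 - a ^+ n.+1 - n.+1%:R * a ^+ n * (b - a))
    - (b ^+ n.+2 - a ^+ n.+2 - n.+2%:R * a ^+ n.+1 * (b - a)).
  have : a ^+ n * (b - a) * t =
    2 * (b ^+ n.+1 - a ^+ n.+1 - n.+1%:R * a ^+ n * (b - a))
    - (b ^+ n.+2 - a ^+ n.+2 - n.+2%:R * a ^+ n.+1 * (b - a))
    + (a ^+ n.+1 * (2 - a) - b ^+ n.+1 * (2 - b)).
    have e2 : n.+2%:R = n.+1%:R + 1 :> algC by rewrite -addn1 natrD.
    rewrite /t e2; move: (n.+1%:R : algC) => N; rewrite !exprS; ring.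
  by rewrite ha hb subrr addr0.
have Hineq : `|a| ^+ n * `|b - a| * `|t| <=
    2 * n.+1%:R ^+ 2 * `|b - a| ^+ 2 * R ^+ n.+1
    + n.+2%:R ^+ 2 * `|b - a| ^+ 2 * R ^+ n.+2.
  rewrite -normrX -!normrM key.
  apply: le_trans (ler_normB _ _) _.
  rewrite normrM normr_nat.
  apply: lerD; last exact: Ebound.
  apply: le_trans (ler_wpM2l _ (Ebound _ _ _ n hR1 haR hbR)) _ => //.
  by rewrite !mulrA.
have sR : sqrtC n.+1%:R \is Creal by apply: ger0_real; rewrite sqrtC_ge0 ler0n.
have qR : sqrtC 3 \is Creal by apply: ger0_real; rewrite sqrtC_ge0 ler0n.
have H := @real_main algR n (in_algR (normr_real a)) (in_algR (normr_real (2 - a)))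
  (in_algR (normr_real t)) (in_algR (normr_real (b - a))) (in_algR sR) (in_algR qR) hn.
rewrite distrC.
suff Hs : (1 / (n.+1%:R * in_algR sR * in_algR qR ^+ n.+1) < in_algR (normr_real (b - a))).
  move: (lift_lt Hs); rewrite !(rmorph_nat, rmorphM, rmorphD, rmorphB, rmorphXn, rmorph1, rmorph0, fmorph_div) /=.
  rewrite (rmorphXn algRval) (rmorph_nat algRval) /=. exact: id.
have e2 : n.+2%:R = n.+1%:R + 1 :> algC by rewrite -addn1 natrD.
apply: H.
- by apply: lift_le; rewrite (rmorph0 algRval) /=.
- by apply: lift_le; rewrite (rmorph0 algRval) /=.
- by apply: lift_le; rewrite (rmorph0 algRval) /=.
- by apply: lift_lt'; rewrite (rmorph0 algRval) /= normr_gt0 subr_eq0 eq_sym.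
- by apply: lift_le; rewrite (rmorph0 algRval) /= sqrtC_ge0 ler0n.
- by apply: lift_le; rewrite (rmorph0 algRval) /= sqrtC_ge0 ler0n.
- by apply: lift_eq; rewrite (rmorphXn algRval) (rmorph_nat algRval) /= sqrtCK.
- by apply: lift_eq; rewrite (rmorphXn algRval) (rmorph_nat algRval) /= sqrtCK.
- apply: lift_eq; rewrite (rmorphM algRval) (rmorphXn algRval) (rmorph1 algRval) /=.
  by rewrite -normrX -normrM ha normr1.
- apply: lift_le; rewrite (rmorphD algRval) (rmorph_nat algRval) /=.
  by apply: le_trans (ler_normB _ _) _; rewrite (ger0_norm (ler0n _ 2)).
- apply: lift_le; rewrite (rmorphD algRval) (rmorph_nat algRval) /=.
  rewrite {1}(_ : a = 2 - (2 - a)); last by ring.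
  by apply: le_trans (ler_normB _ _) _; rewrite (ger0_norm (ler0n _ 2)) addrC.
- apply: lift_le; rewrite (rmorphB algRval) (rmorphM algRval) !(rmorph_nat algRval) /=.
  have E : n.+2%:R * (2 - a) = 2 - t by rewrite /t e2; ring.
  rewrite -(ger0_norm (ler0n _ n.+2)) -normrM E.
  by have := lerB_normD 2 (- t); rewrite normrN (ger0_norm (ler0n _ 2)).
- apply: lift_le; rewrite (rmorphB algRval) !(rmorphM algRval) !(rmorph_nat algRval) /=.
  have E : n.+2%:R * a = 2 * n.+1%:R + t by rewrite /t; ring.
  rewrite -(ger0_norm (ler0n _ n.+2)) -normrM E.
  have h2 : 0 <= 2 * n.+1%:R :> algC by rewrite mulr_ge0 ?ler0n.
  by have := lerB_normD (2 * n.+1%:R) t; rewrite (ger0_norm h2).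
- have Hval : algRval (if 1 <= in_algR (normr_real a) then in_algR (normr_real a) else 1) = R.
    by rewrite /R lift_leE /=; case: ifP.
  rewrite -Hval in Hineq.
  apply: lift_le; rewrite (rmorphD algRval) !(rmorphM algRval) !(rmorphXn algRval) !(rmorph_nat algRval).
  exact Hineq.
Qed.
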